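(* Let $X$ be a centered Gaussian random vector in a separable Hilbert space $(H,\langle\cdot,\cdot\rangle)$ with ${\mathbb E}\|X\|^2<\infty$ whose covariance operator $C_X y={\mathbb E}(\langle y,X\rangle X)$ has infinitely many nonzero eigenvalues $\lambda_1\ge\lambda_2\ge\dots>0$ with corresponding orthonormal eigenvectors $(u_j)_{j\ge1}$, so that $X=\sum_{j\ge1}\lambda_j^{1/2}Z_ju_j$ with $Z_j:=\langle X,u_j\rangle/\lambda_j^{1/2}$ i.i.d. $N(0,1)$. Let $n\ge1$ and let $m,l,n_1,\dots,n_m\in{\mathbb N}$ with $\prod_{j=1}^m n_j\le n$. For $j=1,\dots,m$ let $Z^{(j)}:=(Z_{(j-1)l+1},\dots,Z_{jl})$, let $\alpha_j\subset{\mathbb R}^l$ be an $L^2$-optimal $n_j$-quantizer for $Z^{(j)}$ (with respect to the Euclidean norm), let $\widehat{Z^{(j)}}=\sum_{b\in\alpha_j}b\,\mathbf 1_{C_b(\alpha_j)}(Z^{(j)})$ be a Voronoi $\alpha_j$-quantization of $Z^{(j)}$, and set \[\hat X^n:=\sum_{j=1}^m\sum_{k=1}^l\lambda^{1/2}_{(j-1)l+k}(\widehat{Z^{(j)}})_k\,u_{(j-1)l+k}.\] Then \[{\mathbb E}\|X-\hat X^n\|^2\le\sum_{j=1}^m\lambda_{(j-1)l+1}\,e_{n_j}(N(0,I_l))^2+\sum_{j\ge ml+1}\lambda_j.\] Moreover, this inequality is an equality if $l=1$ (or if $\lambda_{(j-1)l+1}=\dots=\lambda_{jl}$ for every $j$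).
   Context: For a random vector $Y$ in ${\mathbb R}^d$ (Euclidean norm) or in $H$ with finite second moment, $e_k(Y):=\inf\{({\mathbb E}\min_{a\in\alpha}\|Y-a\|^2)^{1/2}:\mathrm{card}(\alpha)\le k\}$, and $e_k(N(0,I_l))$ denotes this quantity for a standard normal vector in ${\mathbb R}^l$. An $L^2$-optimal $k$-quantizer for $Y$ is a set $\alpha$ with $\mathrm{card}(\alpha)\le k$ attaining this infimum. A Voronoi partition $\{C_b(\alpha):b\in\alpha\}$ is a Borel partition with $C_b(\alpha)\subset\{x:\|x-b\|=\min_{c\in\alpha}\|x-c\|\}$. *)

(* Defs.v *)
From HB Require Import structures.
From mathcomp Require Import all_boot all_order all_algebra finmap.
From mathcomp Require Import all_classical all_reals all_analysis.

Set Implicit Arguments.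
Unset Strict Implicit.
Unset Printing Implicit Defensive.

Import Order.TTheory GRing.Theory Num.Theory.
Import numFieldNormedType.Exports.

Local Open Scope classical_set_scope.
Local Open Scope ring_scope.

Definition is_inner_product {R : realType} {H : normedModType R}
    (ip : H -> H -> R) : Prop :=
  [/\ (forall x y, ip x y = ip y x),
      (forall (a : R) x y z, ip (a *: x + y) z = a * ip x z + ip y z) &
      (forall x, ip x x = `|x| ^+ 2)].

Definition separable {R : realType} {H : normedModType R} : Prop :=
  exists S : set H, countable S /\ closure S = setT.

Definition centered_gauss_law {R : realType} (s : R) (A : set R) : \bar R :=
  if s == 0 then \d_(0:R) A else normal_prob 0 s A.

Definition Rl (R : realType) (l : nat) :=
  g_sigma_algebraType (@open 'rV[R]_l).

Definition eucl {R : realType} {l : nat} (x : 'rV[R]_l) : R :=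
  Num.sqrt (\sum_(i < l) x ord0 i ^+ 2).

(* min_{a in alpha} |x - a|^2  (= +oo for empty alpha) *)
Definition mindist2 {R : realType} {l : nat} (alpha : {fset 'rV[R]_l})
    (x : 'rV[R]_l) : \bar R :=
  \big[mine/+oo%E]_(a <- alpha) ((eucl (x - a)) ^+ 2)%:E.

Definition e_rv {R : realType} {d} {Om : measurableType d}
    (P : probability Om R) {l : nat} (Y : Om -> 'rV[R]_l) (k : nat) : \bar R :=
  ereal_inf [set sqrte (\int[P]_w mindist2 alpha (Y w))%E
            | alpha in [set alpha : {fset 'rV[R]_l} | (#|` alpha|%fset <= k)%N]].

Definition e_law {R : realType} {l : nat} (mu : probability (Rl R l) R)
    (k : nat) : \bar R :=
  ereal_inf [set sqrte (\int[mu]_x mindist2 alpha x)%E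
            | alpha in [set alpha : {fset 'rV[R]_l} | (#|` alpha|%fset <= k)%N]].

Definition std_normal_law {R : realType} {l : nat}
    (mu : probability (Rl R l) R) : Prop :=
  forall A : 'I_l -> set R, (forall i, measurable (A i)) ->
    mu [set x : Rl R l | forall i, A i (x ord0 i)]
    = (\prod_(i < l) normal_prob 0 1 (A i))%E.

Definition optimal_quantizer {R : realType} {d} {Om : measurableType d}
    (P : probability Om R) {l : nat} (Y : Om -> 'rV[R]_l) (k : nat)
    (alpha : {fset 'rV[R]_l}) : Prop :=
  (#|` alpha|%fset <= k)%N /\
  sqrte (\int[P]_w mindist2 alpha (Y w))%E = e_rv P Y k.

Definition voronoi_partition {R : realType} {l : nat}
    (alpha : {fset 'rV[R]_l}) (C : 'rV[R]_l -> set (Rl R l)) : Prop :=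
  [/\ (forall b, b \in alpha -> measurable (C b)),
      (forall b c, b \in alpha -> c \in alpha -> b != c -> C b `&` C c = set0),
      (forall x : 'rV[R]_l, exists2 b, b \in alpha & C b x) &
      (forall b, b \in alpha -> forall x, C b x ->
         forall c, c \in alpha -> eucl (x - b) <= eucl (x - c))].

Definition mutually_independent {R : realType} {d} {Om : measurableType d}
    (P : probability Om R) (Z : nat -> Om -> R) : Prop :=
  forall (F : seq nat) (A : nat -> set R), uniq F ->
    (forall i, measurable (A i)) ->
    P (\bigcap_(i in [set i | i \in F]) (Z i @^-1` A i))
    = (\prod_(i <- F) P (Z i @^-1` A i))%E.

(* Main.v *)
Require Import Defs.
From HB Require Import structures.
From mathcomp Require Import all_boot all_order all_algebra finmap.
From mathcomp Require Import all_classical all_reals all_analysis.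
From mathcomp Require Import measurable_realfun.
From mathcomp Require Import lra.
Import Order.TTheory GRing.Theory Num.Theory.
Import numFieldNormedType.Exports.
Local Open Scope classical_set_scope.
Local Open Scope ring_scope.
Set Implicit Arguments.
Unset Strict Implicit.
Unset Printing Implicit Defensive.
Section box.
Variables (R : realType) (l : nat).
Definition box (A : 'I_l -> set R) : set (Rl R l) := [set x | forall i, A i (x ord0 i)].
Definition Gbox : set (set (Rl R l)) :=
  [set B | exists2 A : 'I_l -> set R, (forall i, measurable (A i)) & B = box A].

Lemma measurable_coord i : measurable_fun setT (fun x : Rl R l => x ord0 i).
Proof.
apply: (measurability _ (RGenOpens.measurableE R)).
move=> _ [_ [a [b ->]] <-].
rewrite setTI; apply: sub_sigma_algebra.
have := (@continuousP 'rV[R]_l R (fun x : 'rV[R]_l => x ord0 i)).1.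
move=> /(_ (@coord_continuous R 1 l ord0 i)); apply.
exact: interval_open.
Qed.

Lemma Gbox_meas : Gbox `<=` measurable.
Proof.
move=> _ [A mA ->].
have -> : box A = \bigcap_(i in [set: 'I_l]) ((fun x : Rl R l => x ord0 i) @^-1` A i).
  by apply/seteqP; split => x /= H i; [move=> _|]; apply: H.
apply: fin_bigcap_measurable; first exact: finite_finset.
by move=> i _; rewrite -[_ @^-1` _]setTI; apply: measurable_coord.
Qed.


Definition rbox (p : 'rV[rat]_l * 'rV[rat]_l) : set (Rl R l) :=
  box (fun i => `](ratr (p.1 ord0 i) : R), ratr (p.2 ord0 i)[%classic).

Lemma open_Gbox (U : set 'rV[R]_l) : open U -> <<s Gbox >> U.
Proof.
move=> oU.
pose F p := if pselect (rbox p `<=` U) is left _ then rbox p else set0.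
have -> : U = \bigcup_p F p.
  apply/seteqP; split; last first.
    by move=> x [p _]; rewrite /F; case: pselect => // sub /sub.
  move=> x Ux.
  have : nbhs x U by move: oU; rewrite openE => /(_ x Ux).
  move=> /nbhs_ballP [e e0 sub].
  have ex i : exists q : rat * rat,
      (x ord0 i - e < ratr q.1 < x ord0 i) && (x ord0 i < ratr q.2 < x ord0 i + e).
    have [q1 Hq1] : exists q, (ratr q : R) \in `](x ord0 i - e), (x ord0 i)[ by apply: rat_in_itvoo; rewrite ltrBlDr ltrDl.
    have [q2 Hq2] : exists q, (ratr q : R) \in `](x ord0 i), (x ord0 i + e)[ by apply: rat_in_itvoo; rewrite ltrDl.
    by exists (q1, q2); rewrite !in_itv /= in Hq1 Hq2; rewrite Hq1 Hq2.
  have [q Hq] := choice ex.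
  pose p := (\row_i (q i).1, \row_i (q i).2).
  have Hsub : rbox p `<=` U.
    move=> y Hy; apply: sub.
    split => // i0 j; rewrite (ord1 i0).
    have /andP[/andP[h1 h2] /andP[h3 h4]] := Hq j.
    move: (Hy j); rewrite /= !mxE in_itv /= => /andP[h5 h6].
    rewrite /ball /= ltr_norml; apply/andP; split.
      lra.
    lra.
  exists p => //; rewrite /F; case: pselect => // _.
  move=> j; have /andP[/andP[h1 h2] /andP[h3 h4]] := Hq j.
  by rewrite /= !mxE in_itv /= h2 h3.
pose Rb := g_sigma_algebraType Gbox.
apply: (@countable_bigcupT_measurable _ Rb _ F); first exact: countableP.
move=> p; rewrite /F; case: pselect => _; last exact: measurable0.
apply: sub_sigma_algebra; eexists; last reflexivity.
by move=> i; apply: measurable_itv.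
Qed.

Lemma measurable_Gbox : @measurable _ (Rl R l) = <<s Gbox >>.
Proof.
apply/seteqP; split.
  apply: smallest_sub; first exact: smallest_sigma_algebra.
  exact: open_Gbox.
apply: smallest_sub; first exact: sigma_algebra_measurable.
exact: Gbox_meas.
Qed.

Lemma box_setI A B : box A `&` box B = box (fun i => A i `&` B i).
Proof. by apply/seteqP; split => x /=; [move=> [H1 H2] i|move=> H; split => i; case: (H i)]. Qed.

Lemma law_unique (m1 m2 : probability (Rl R l) R) :
  (forall A : 'I_l -> set R, (forall i, measurable (A i)) -> m1 (box A) = m2 (box A)) ->
  forall E, measurable E -> m1 E = m2 E.
Proof.
move=> H E mE.
apply: (@g_sigma_algebra_measure_unique _ R _ Gbox Gbox_meas (fun _ => setT)).
- move=> _; exists (fun _ => setT) => //.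
  by apply/seteqP; split.
- by apply/seteqP; split => // x _; exists 0%N.
- move=> _ _ [A mA ->] [B mB ->]; rewrite box_setI; exists (fun i => A i `&` B i) => //.
  by move=> i; apply: measurableI.
- by move=> _ [A mA ->]; apply: H.
- move=> _; apply: (le_lt_trans (probability_le1 _ measurableT)); exact: ltey.
- by rewrite -measurable_Gbox.
Qed.

Lemma measurable_rowfun d (T : measurableType d) (Y : T -> 'rV[R]_l) :
  (forall i, measurable_fun setT (fun w => Y w ord0 i)) ->
  measurable_fun setT (Y : T -> Rl R l).
Proof.
move=> mY; apply: (measurability _ measurable_Gbox).
move=> _ [_ [A mA ->] <-].
have -> : setT `&` (Y : T -> Rl R l) @^-1` box A =
  \bigcap_(i in [set: 'I_l]) (setT `&` (fun w => Y w ord0 i) @^-1` A i).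
  by apply/seteqP; split => x /=; [move=> [_ H] i _; split|move=> H; split => // i; case: (H i)].
apply: fin_bigcap_measurable; first exact: finite_finset.
by move=> i _; apply: mY.
Qed.


Lemma measurable_mindist2 (alpha : {fset 'rV[R]_l}) :
  measurable_fun setT (fun x : Rl R l => mindist2 alpha x).
Proof.
rewrite /mindist2; elim: (alpha : seq _) => [|a s IH].
  by under eq_fun do rewrite big_nil; exact: measurable_cst.
under eq_fun do rewrite big_cons.
apply: measurable_mine => //.
apply/measurable_EFinP.
have -> : (fun x : Rl R l => eucl (x - a) ^+ 2) =
          (fun x : Rl R l => \sum_(i < l) (x ord0 i - a ord0 i) ^+ 2).
  apply/funext => x; rewrite /eucl sqr_sqrtr; last by apply: sumr_ge0 => i _; exact: sqr_ge0.
  by apply: eq_bigr => i _; rewrite !mxE.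
apply: measurable_sum => i; apply: measurable_funX.
by apply: measurable_funB; [exact: measurable_coord|exact: measurable_cst].
Qed.

Lemma mindist2_ge0 (alpha : {fset 'rV[R]_l}) x : (0 <= mindist2 alpha x)%E.
Proof.
rewrite /mindist2; elim: (alpha : seq _) => [|a s IH]; first by rewrite big_nil.
by rewrite big_cons le_min IH lee_fin sqr_ge0.
Qed.

Lemma e_rv_law d (Om : measurableType d) (P : probability Om R) (Y : Om -> 'rV[R]_l)
    (gam : probability (Rl R l) R) :
  (forall i, measurable_fun setT (fun w => Y w ord0 i)) ->
  (forall A : 'I_l -> set R, (forall i, measurable (A i)) ->
     P ((Y : Om -> Rl R l) @^-1` box A) = gam (box A)) ->
  (forall alpha, (\int[P]_w mindist2 alpha (Y w) = \int[gam]_x mindist2 alpha x)%E) /\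
  forall k, e_rv P Y k = e_law gam k.
Proof.
move=> mYi HY.
have mY := measurable_rowfun mYi.
pose Yp : {mfun Om >-> Rl R l} := HB.pack (Y : Om -> Rl R l) (isMeasurableFun.Build _ _ _ _ _ mY).
have Heq : forall E, measurable E -> distribution P Yp E = gam E.
  by apply: law_unique => A mA; rewrite -HY.
have Hint alpha : (\int[P]_w mindist2 alpha (Y w) = \int[gam]_x mindist2 alpha x)%E.
  rewrite (@eq_measure_integral _ _ _ setT (distribution P Yp) gam); last first.
    by move=> A mA _; exact: (esym (Heq A mA)).
  by rewrite ge0_integral_distribution //; [exact: measurable_mindist2|move=> y; exact: mindist2_ge0].
split => // k.
rewrite /e_rv /e_law; congr ereal_inf.
by apply/seteqP; split => _ [alpha Ha <-]; exists alpha => //; rewrite Hint.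
Qed.

End box.

Section hil.
Variables (R : realType) (H : normedModType R) (ip : H -> H -> R).
Hypothesis hip : is_inner_product ip.

Lemma ipC x y : ip x y = ip y x. Proof. by case: hip. Qed.
Lemma ipLin a x y z : ip (a *: x + y) z = a * ip x z + ip y z. Proof. by case: hip. Qed.
Lemma ipxx x : ip x x = `|x| ^+ 2. Proof. by case: hip. Qed.

Lemma ip0l z : ip 0 z = 0.
Proof. have := ipLin 1 0 0 z; rewrite scaler0 addr0 mul1r => h; lra. Qed.
Lemma ipZl a x z : ip (a *: x) z = a * ip x z.
Proof. by have := ipLin a x 0 z; rewrite addr0 ip0l addr0. Qed.
Lemma ipDl x y z : ip (x + y) z = ip x z + ip y z.
Proof. by have := ipLin 1 x y z; rewrite scale1r mul1r. Qed.
Lemma ipBl x y z : ip (x - y) z = ip x z - ip y z.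
Proof. by rewrite ipDl -scaleN1r ipZl mulN1r. Qed.
Lemma ip_suml I (s : seq I) (F : I -> H) z :
  ip (\sum_(i <- s) F i) z = \sum_(i <- s) ip (F i) z.
Proof.
elim: s => [|a s IH]; first by rewrite !big_nil ip0l.
by rewrite !big_cons ipDl IH.
Qed.
Lemma ip_sumr I (s : seq I) (F : I -> H) z :
  ip z (\sum_(i <- s) F i) = \sum_(i <- s) ip z (F i).
Proof. by rewrite ipC ip_suml; apply: eq_bigr => i _; rewrite ipC. Qed.

Variable u : nat -> H.
Hypothesis hu : forall i j, ip (u i) (u j) = (i == j)%:R.

Lemma norm_sum_orth (a : nat -> R) N :
  `|\sum_(i < N) a i *: u i| ^+ 2 = \sum_(i < N) a i ^+ 2.
Proof.
rewrite -ipxx ip_suml; apply: eq_bigr => i _.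
rewrite ipZl ip_sumr.
rewrite (bigD1 i) //= big1 ?addr0.
  by rewrite ipC ipZl hu eqxx mulr1 expr2.
move=> j ji; rewrite ipC ipZl hu.
have -> : (nat_of_ord j == nat_of_ord i) = false by apply/negbTE.
by rewrite mulr0.
Qed.

Lemma norm_lim (S : nat -> H) (x y : H) (a : nat -> R) M :
  S @ \oo --> x ->
  (forall N, (M <= N)%N -> `|S N - y| ^+ 2 = \sum_(i < N) a i ^+ 2) ->
  ((`|x - y| ^+ 2)%:E = \sum_(i <oo) ((a i ^+ 2)%:E))%E.
Proof.
move=> Sx HS; apply/esym/cvg_lim => //.
have h1 : (fun N => `|S N - y| ^+ 2) @ \oo --> `|x - y| ^+ 2.
  under eq_fun do rewrite expr2.
  rewrite expr2; apply: cvgM; apply: cvg_norm; apply: cvgB => //; exact: cvg_cst.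
apply/fine_cvgP; split; first by apply: nearW => n; rewrite sumEFin.
apply: cvg_trans h1; apply: near_eq_cvg; near=> N.
rewrite /= sumEFin /= big_mkord HS //; near: N; by exists M.
Unshelve. all: by end_near.
Qed.
End hil.

Lemma big_mul_ord (T : Type) (idx : T) (op : Monoid.com_law idx) m l (F : nat -> T) :
  \big[op/idx]_(i < m * l) F i = \big[op/idx]_(j < m) \big[op/idx]_(k < l) F (j * l + k)%N.
Proof.
elim: m => [|m IH]; first by rewrite mul0n !big_ord0.
rewrite mulSnr big_split_ord /= IH big_ord_recr /=.
by congr (op _ _); apply: eq_bigr => k _.
Qed.

Section minlemmas.
Variable R : realType.
Local Open Scope ereal_scope.
Lemma bigmin_le (T : eqType) (s : seq T) (F : T -> \bar R) b :
  b \in s -> \big[mine/+oo]_(a <- s) F a <= F b.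
Proof.
elim: s => [//|a s IH]; rewrite inE big_cons => /orP [/eqP ->|bs].
  by rewrite ge_min lexx.
by rewrite ge_min (IH bs) orbT.
Qed.
Lemma le_bigmin (T : eqType) (s : seq T) (F : T -> \bar R) c :
  (forall a, a \in s -> c <= F a) -> c <= \big[mine/+oo]_(a <- s) F a.
Proof.
elim: s => [|a s IH] H; first by rewrite big_nil leey.
rewrite big_cons le_min H ?mem_head //= IH // => a' Ha'.
by apply: H; rewrite inE Ha' orbT.
Qed.
End minlemmas.

Section voronoi.
Variables (R : realType) (l : nat).
Lemma voronoi_hat (alpha : {fset 'rV[R]_l}) (C : 'rV[R]_l -> set (Rl R l)) x b :
  voronoi_partition alpha C -> b \in alpha -> C b x ->
  \sum_(b' <- alpha) (\1_(C b') (x : Rl R l)) *: b' = b /\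
  mindist2 alpha x = ((eucl (x - b)) ^+ 2)%:E.
Proof.
move=> [mC disj cov near] ba Cbx; split.
  rewrite (bigD1_seq b) //=.
  rewrite big_seq_cond big1 ?addr0; first by rewrite indicE mem_set // scale1r.
  move=> b' /andP [b'a b'b]; rewrite indicE.
  case: (boolP (x \in C b')) => [/set_mem Cb'x|]; last by rewrite scale0r.
  have : (C b' `&` C b) x by split.
  by rewrite disj.
apply/eqP; rewrite eq_le; apply/andP; split; first exact: bigmin_le.
apply: le_bigmin => a aa; rewrite lee_fin; apply: lerXn2r; rewrite ?nnegrE ?sqrtr_ge0 //.
exact: near.
Qed.
End voronoi.

Section aeint.
Variables (d : measure_display) (T : measurableType d) (R : realType).
Variable mu : {measure set T -> \bar R}.
Local Open Scope ereal_scope.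

Lemma nn_le_integral (f1 f2 : T -> \bar R) :
  (forall x, 0 <= f1 x) -> (forall x, f1 x <= f2 x) ->
  \int[mu]_x f1 x <= \int[mu]_x f2 x.
Proof.
move=> f10 f12.
have f20 x : 0 <= f2 x by apply: le_trans (f12 x).
rewrite !ge0_integralE //; apply: le_ereal_sup => _ [h hf <-]; exists h => //.
move=> x; apply: le_trans (hf x) _.
rewrite /patch; case: ifP => _ //.
Qed.

Lemma ae_integral_eq (f g : T -> \bar R) (N : set T) :
  measurable N -> mu N = 0 -> (forall x, ~ N x -> f x = g x) ->
  measurable_fun setT g -> (forall x, 0 <= f x) -> (forall x, 0 <= g x) ->
  \int[mu]_x f x = \int[mu]_x g x.
Proof.
move=> mN N0 fg mg f0 g0.
pose g1 x := g x * (\1_(~` N) x)%:E.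
pose g2 x := g x + (\1_N x)%:E * +oo.
have mg1 : measurable_fun setT g1.
  apply: emeasurable_funM => //; apply/measurable_EFinP.
  by apply: measurable_indic; exact: measurableC.
have mg2 : measurable_fun setT g2.
  apply: emeasurable_funD => //; apply: emeasurable_funM; last exact: measurable_cst.
  by apply/measurable_EFinP; exact: measurable_indic.
have g10 x : 0 <= g1 x by rewrite /g1 mule_ge0 // lee_fin.
have g20 x : 0 <= g2 x by rewrite /g2 adde_ge0 // mule_ge0 // lee_fin.
have aeN (h : T -> \bar R) : (forall x, ~ N x -> g x = h x) -> ae_eq mu setT g h.
  move=> gh; exists N; split => // x /= H; apply: contrapT => Nx; apply: H => _.
  exact: gh.
have e1 : \int[mu]_x g x = \int[mu]_x g1 x.
  apply: ge0_ae_eq_integral => //; apply: aeN => x Nx.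
  by rewrite /g1 indicE mem_set // mule1.
have e2 : \int[mu]_x g x = \int[mu]_x g2 x.
  apply: ge0_ae_eq_integral => //; apply: aeN => x Nx.
  by rewrite /g2 indicE memNset // mul0e adde0.
apply/eqP; rewrite eq_le; apply/andP; split.
  rewrite e2; apply: nn_le_integral => // x.
  have [Nx|Nx] := pselect (N x).
    by rewrite /g2 indicE mem_set // mul1e addey ?leey // gt_eqF // (lt_le_trans _ (g0 x)) ?ltNy0.
  by rewrite /g2 indicE memNset // mul0e adde0 fg.
rewrite e1; apply: nn_le_integral => // x.
have [Nx|Nx] := pselect (N x).
  by rewrite /g1 indicE memNset ?mule0 //= => /(_ Nx).
by rewrite /g1 indicE mem_set // mule1 fg.
Qed.
End aeint.


Unset Implicit Arguments.
Set Strict Implicit.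

Theorem lemma1 (R : realType) (d : measure_display) (Om : measurableType d)
  (P : probability Om R)
  (H : completeNormedModType R) (ip : H -> H -> R)
  (X : Om -> H) (lam : nat -> R) (u : nat -> H)
  (n m l : nat) (nn : nat -> nat)
  (alpha : nat -> {fset 'rV[R]_l}) (C : nat -> 'rV[R]_l -> set (Rl R l))
  (gam : probability (Rl R l) R) :
  is_inner_product ip -> @separable R H ->
  (forall y, measurable_fun setT (fun w => ip y (X w))) ->
  (forall y, exists2 s : R, 0 <= s &
     forall A : set R, measurable A ->
       P [set w | A (ip y (X w))] = centered_gauss_law s A) ->
  (\int[P]_w (`|X w| ^+ 2)%:E < +oo)%E ->
  (forall j, 0 < lam j) -> (forall j, lam j.+1 <= lam j) ->
  (forall i j, ip (u i) (u j) = (i == j)%:R) ->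
  (forall j y, (\int[P]_w (ip (u j) (X w) * ip y (X w))%:E)%E
               = (lam j * ip y (u j))%:E) ->
  (forall y, (forall j, ip y (u j) = 0) ->
     forall z, (\int[P]_w (ip y (X w) * ip z (X w))%:E)%E = 0%E) ->
  let Z := fun j w => ip (X w) (u j) / Num.sqrt (lam j) in
  mutually_independent P Z ->
  (forall j A, measurable A -> P (Z j @^-1` A) = normal_prob 0 1 A) ->
  {ae P, forall w,
     (fun N => \sum_(j < N) (Num.sqrt (lam j) * Z j w) *: u j) @ \oo --> X w} ->
  (1 <= n)%N -> (\prod_(j < m) nn j <= n)%N ->
  let Zb := fun j w => \row_(k < l) Z (j * l + k)%N w in
  (forall j, (j < m)%N -> optimal_quantizer P (Zb j) (nn j) (alpha j)) ->
  (forall j, (j < m)%N -> voronoi_partition (alpha j) (C j)) ->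
  let Zhat := fun j w => \sum_(b <- alpha j) (\1_(C j b) (Zb j w : Rl R l)) *: b in
  let Xhat := fun w => \sum_(j < m) \sum_(k < l)
        (Num.sqrt (lam (j * l + k)%N) * Zhat j w ord0 k) *: u (j * l + k)%N in
  std_normal_law gam ->
  let err := (\int[P]_w (`|X w - Xhat w| ^+ 2)%:E)%E in
  let bound := (\sum_(j < m) ((lam (j * l)%N)%:E * (e_law gam (nn j) * e_law gam (nn j)))
                + \sum_(m * l <= j <oo) (lam j)%:E)%E in
  (err <= bound)%E /\
  ((l = 1%N \/ (forall j k, (j < m)%N -> (k < l)%N -> lam (j * l + k)%N = lam (j * l)%N))
     -> err = bound).
Proof.
move=> hip _ mX _ _ lam0 lamdec hu eig _ Z indep Zlaw conv _ _ Zb opt vor Zhat Xhat stdg err bound.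
have sl0 i : 0 < Num.sqrt (lam i) by rewrite sqrtr_gt0.
pose c i w := ip (X w) (u i).
have cZ i w : Num.sqrt (lam i) * Z i w = c i w.
  by rewrite /Z mulrC divfK // gt_eqF.
have mc i : measurable_fun setT (c i).
  by rewrite /c; under eq_fun do rewrite (ipC hip); exact: mX.
have mZ i : measurable_fun setT (Z i).
  have -> : Z i = (c i) \* cst (Num.sqrt (lam i))^-1 by [].
  by apply: measurable_funM => //; exact: measurable_cst.
have lam_mono a b : (a <= b)%N -> lam b <= lam a.
  elim: b => [|b IH]; first by rewrite leqn0 => /eqP ->.
  rewrite leq_eqVlt => /orP [/eqP -> //| ab]; exact: le_trans (lamdec b) (IH ab).
have Ec2 i : (\int[P]_w ((c i w) ^+ 2)%:E = (lam i)%:E)%E.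
  have := eig i (u i); rewrite hu eqxx mulr1 => <-.
  by apply: eq_integral => w _; rewrite expr2 /c (ipC hip).
have mZb j (k : 'I_l) : measurable_fun setT (fun w => Zb j w ord0 k).
  by rewrite /Zb; under eq_fun do rewrite mxE; exact: mZ.
have lawZb j (A : 'I_l -> set R) : (forall i, measurable (A i)) ->
    P ((Zb j : Om -> Rl R l) @^-1` box A) = gam (box A).
  move=> mA.
  have -> : gam (box A) = (\prod_(i < l) normal_prob 0 1 (A i))%E by rewrite -stdg.
  pose F := map (fun k => j * l + k)%N (iota 0 l).
  pose A' i := if insub (i - j * l)%N is Some k then A k else setT.
  have A'E (k : 'I_l) : A' (j * l + k)%N = A k by rewrite /A' addKn valK.
  have -> : (Zb j : Om -> Rl R l) @^-1` box A =
      \bigcap_(i in [set i | i \in F]) (Z i @^-1` A' i).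
    apply/seteqP; split => w /=.
      move=> Hw i /= /mapP [k]; rewrite mem_iota add0n => kl ->.
      have := Hw (Ordinal kl); rewrite mxE /= -(A'E (Ordinal kl)) //.
    move=> Hw k; rewrite mxE -A'E; apply: Hw => /=.
    by apply/mapP; exists (val k) => //; rewrite mem_iota add0n ltn_ord.
  rewrite indep; last 2 first.
  - rewrite map_inj_uniq ?iota_uniq //; exact: addnI.
  - move=> i; rewrite /A'; case: insub => [k|]; [exact: mA|exact: measurableT].
  rewrite big_map.
  have -> : iota 0 l = index_iota 0 l by rewrite /index_iota subn0.
  rewrite big_mkord; apply: eq_bigr => k _.
  by rewrite A'E Zlaw.
have eq_e j : e_rv P (Zb j) (nn j) = e_law gam (nn j).
  exact: ((e_rv_law (mZb j) (lawZb j)).2 (nn j)).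
have intmin j : (j < m)%N ->
    (\int[P]_w mindist2 (alpha j) (Zb j w) = e_law gam (nn j) * e_law gam (nn j))%E.
  move=> jm; have [_ h] := opt j jm; rewrite -eq_e -h.
  have I0 : (0 <= \int[P]_w mindist2 (alpha j) (Zb j w))%E.
    by apply: integral_ge0 => w _; exact: mindist2_ge0.
  by rewrite -[LHS](sqr_sqrte I0).
case: conv => Nb [mNb PNb0 subNb].
pose dz i w := \sum_(k < l | (k : nat) == (i %% l)%N) Zhat (i %/ l)%N w ord0 k.
have dzE j (k : 'I_l) w : dz (j * l + k)%N w = Zhat j w ord0 k.
  have l0 : (0 < l)%N by apply: leq_ltn_trans (leq0n k) (ltn_ord k).
  rewrite /dz modnMDl modn_small // divnMDl // divn_small // addn0.
  by rewrite (big_pred1 k).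
pose e i w := c i w - (if (i < m * l)%N then Num.sqrt (lam i) * dz i w else 0).
have XhatE w : Xhat w = \sum_(i < m * l) (Num.sqrt (lam i) * dz i w) *: u i.
  rewrite (big_mul_ord _ m l (fun i => (Num.sqrt (lam i) * dz i w) *: u i)).
  by apply: eq_bigr => j _; apply: eq_bigr => k _; rewrite dzE.
have diff w M : (m * l <= M)%N ->
    \sum_(i < M) (Num.sqrt (lam i) * Z i w) *: u i - Xhat w = \sum_(i < M) e i w *: u i.
  move=> hM; rewrite XhatE (big_ord_widen M (fun i => (Num.sqrt (lam i) * dz i w) *: u i) hM).
  rewrite [X in _ - X]big_mkcond /= -sumrB; apply: eq_bigr => i _; rewrite cZ /e.
  by case: ifP => _; rewrite ?scale0r ?subr0 // scalerBl.
have ptw w : ~ Nb w -> ((`|X w - Xhat w| ^+ 2)%:E = \sum_(i <oo) ((e i w) ^+ 2)%:E)%E.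
  move=> Nw.
  have cv : (fun N => \sum_(j < N) (Num.sqrt (lam j) * Z j w) *: u j) @ \oo --> X w.
    by apply: contrapT => h; apply: Nw; apply: subNb.
  apply: (norm_lim (M := (m * l)%N) cv) => M hM.
  by rewrite diff //; exact: (norm_sum_orth hip hu (fun i => e i w) M).
have mZhat j (k : 'I_l) : (j < m)%N -> measurable_fun setT (fun w => Zhat j w ord0 k).
  move=> jm; have [mC _ _ _] := vor j jm.
  rewrite /Zhat.
  suff : forall s, {subset s <= alpha j} -> measurable_fun setT
      (fun w => (\sum_(b <- s) \1_(C j b) (Zb j w : Rl R l) *: b) ord0 k).
    by apply.
  move=> s0 sub0; under eq_fun do rewrite summxE; move: s0 sub0.
  elim => [|b s IH] sub.
    by under eq_fun do rewrite big_nil; exact: measurable_cst.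
  under eq_fun do rewrite big_cons mxE.
  apply: measurable_funD; last first.
    by apply: IH => x xs; apply: sub; rewrite inE xs orbT.
  apply: measurable_funM; last exact: measurable_cst.
  apply: (measurableT_comp (measurable_indic _) (measurable_rowfun (mZb j))).
  by apply: mC; apply: sub; rewrite mem_head.
have me i : measurable_fun setT (e i).
  have [iml|iml] := boolP (i < m * l)%N; rewrite /e ?iml; last first.
    by rewrite (negbTE iml); under eq_fun do rewrite subr0; exact: mc.
  apply: measurable_funB => //; apply: measurable_funM; first exact: measurable_cst.
  have l0 : (0 < l)%N by move: iml; case: (l) => //; rewrite muln0.
  have jm : (i %/ l < m)%N by rewrite ltn_divLR.
  rewrite /dz; under eq_fun do rewrite -big_filter.
  by apply: measurable_sum => k; exact: mZhat.
have e0 i w : (0 <= ((e i w) ^+ 2)%:E)%E by rewrite lee_fin sqr_ge0.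
have errE : err = (\sum_(i <oo) \int[P]_w ((e i w) ^+ 2)%:E)%E.
  rewrite /err (@ae_integral_eq _ _ _ P _ (fun w => \sum_(i <oo) ((e i w) ^+ 2)%:E)%E Nb) //.
  - apply: (@integral_nneseries _ _ _ P setT measurableT (fun i w => ((e i w) ^+ 2)%:E)%E) => // i.
    by apply/measurable_EFinP; apply: measurable_funX.
  - apply: (ge0_emeasurable_sum (P := xpredT)) => // k _.
    by apply/measurable_EFinP; apply: measurable_funX.
  - by move=> w; apply: nneseries_ge0.
have errS : err = (\sum_(j < m) \sum_(k < l) \int[P]_w ((e (j * l + k)%N w) ^+ 2)%:E
                   + \sum_(m * l <= i <oo) (lam i)%:E)%E.
  rewrite errE (@nneseries_split R _ 0 (m * l)); last by move=> k _; apply: integral_ge0.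
  rewrite add0n; congr (_ + _)%E.
    rewrite big_mkord.
    exact: (big_mul_ord _ m l (fun i => \int[P]_w ((e i w) ^+ 2)%:E)%E).
  apply/congr_lim/funext => N'; apply: eq_big_nat => i /andP [hi _].
  rewrite -Ec2; apply: eq_integral => w _.
  by rewrite /e ltnNge hi /= subr0.
pose t j (k : 'I_l) w := (Zb j w ord0 k - Zhat j w ord0 k) ^+ 2.
have hlt j (k : 'I_l) : (j < m)%N -> (j * l + k < m * l)%N.
  move=> jm; rewrite (@leq_trans (j.+1 * l)%N) //; first by rewrite mulSnr ltn_add2l ltn_ord.
  by rewrite leq_mul2r jm orbT.
have eblk j (k : 'I_l) w : (j < m)%N -> e (j * l + k)%N w ^+ 2 = lam (j * l + k)%N * t j k w.
  move=> jm; rewrite /e hlt // dzE -cZ -mulrBr exprMn sqr_sqrtr ?ltW //.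
  by rewrite /t /Zb mxE.
have mt j (k : 'I_l) : (j < m)%N -> measurable_fun setT (t j k).
  move=> jm; apply: measurable_funX; apply: measurable_funB; [exact: mZb|exact: mZhat].
have tmin j w : (j < m)%N -> mindist2 (alpha j) (Zb j w) = (\sum_(k < l) t j k w)%:E.
  move=> jm; have [_ _ cov _] := vor j jm.
  have [b ba Cb] := cov (Zb j w).
  have [h1 h2] := voronoi_hat (vor j jm) ba Cb.
  rewrite h2 /eucl sqr_sqrtr; last by apply: sumr_ge0 => i _; exact: sqr_ge0.
  by congr (_%:E); apply: eq_bigr => k _; rewrite /t /Zhat h1 !mxE.
have blk j : (j < m)%N ->
  (\sum_(k < l) \int[P]_w ((e (j * l + k)%N w) ^+ 2)%:E
      = \int[P]_w (\sum_(k < l) lam (j * l + k)%N * t j k w)%:E)%E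
  /\ ((lam (j * l)%N)%:E * (e_law gam (nn j) * e_law gam (nn j))
      = \int[P]_w (lam (j * l)%N * \sum_(k < l) t j k w)%:E)%E.
  move=> jm; split.
    rewrite -ge0_integral_sum //; last first.
      by move=> k; apply/measurable_EFinP; apply: measurable_funX.
    apply: eq_integral => w _; rewrite sumEFin; congr (_%:E); apply: eq_bigr => k _.
    exact: eblk.
  rewrite -intmin // -ge0_integralZl //; last 3 first.
  - exact: (measurableT_comp (measurable_mindist2 _) (measurable_rowfun (mZb j))).
  - by move=> w _; exact: mindist2_ge0.
  - by rewrite lee_fin ltW.
  by apply: eq_integral => w _; rewrite tmin // EFinM.
have tge0 j k w : 0 <= t j k w by exact: sqr_ge0.
have blkle j : (j < m)%N ->
  (\sum_(k < l) \int[P]_w ((e (j * l + k)%N w) ^+ 2)%:E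
     <= (lam (j * l)%N)%:E * (e_law gam (nn j) * e_law gam (nn j)))%E.
  move=> jm; have [-> ->] := blk j jm; apply: ge0_le_integral => //.
  - move=> w _; rewrite lee_fin; apply: sumr_ge0 => k _.
    by apply: mulr_ge0; [exact: ltW|exact: tge0].
  - apply/measurable_EFinP; apply: measurable_sum => k.
    by apply: measurable_funM; [exact: measurable_cst|exact: mt].
  - apply/measurable_EFinP; apply: measurable_funM; first exact: measurable_cst.
    by apply: measurable_sum => k; exact: mt.
  - move=> w _; rewrite lee_fin mulr_sumr; apply: ler_sum => k _.
    by apply: ler_wpM2r; [exact: tge0|apply: lam_mono; exact: leq_addr].
rewrite errS /bound; split.
  by apply: leeD2r; apply: lee_sum => j _; exact: blkle j (ltn_ord j).
move=> hcond.
have hc j k : (j < m)%N -> (k < l)%N -> lam (j * l + k)%N = lam (j * l)%N.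
  case: hcond => [l1|hc]; last exact: hc.
  by move=> _; rewrite l1 ltnS leqn0 => /eqP ->; rewrite addn0.
congr (_ + _)%E; apply: eq_bigr => j _.
have [-> ->] := blk j (ltn_ord j).
apply: eq_integral => w _; rewrite mulr_sumr; congr (_%:E); apply: eq_bigr => k _.
by rewrite hc.
Qed.
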